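(* Let $\mu$ be a shift-invariant Borel probability measure on $\Sigma^\mathbb{Z}$ and for $c,d\in\mathtt{CA}$ define $\delta^\mu_B(c,d)=\int_{\Sigma^\mathbb{Z}}d_B(c(x),d(x))\,d\mu(x)$. Then $\delta^\mu_B(c,d)=\delta^\mu(c,d)$ for all $c,d\in\mathtt{CA}$.
   Context: $\Sigma$ is a finite alphabet with $|\Sigma|\ge2$. A cellular automaton (CA) is a continuous map $\Sigma^\mathbb{Z}\to\Sigma^\mathbb{Z}$ commuting with the shift $\sigma(x)_i=x_{i+1}$; $\mathtt{CA}$ is the set of all CA. The Besicovitch distance is $d_B(x,y)=\limsup_{n\to\infty}\frac{|\{i:|i|\le n,\ x_i\ne y_i\}|}{2n+1}$. $\mu$ is shift-invariant if $\mu(\sigma(C))=\mu(C)$ for all Borel $C$. $\delta^\mu(c,d)=\mu(\{x\mid c(x)_0\ne d(x)_0\})$. *)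

(* Defs.v *)
From HB Require Import structures.
From mathcomp Require Import all_boot all_order all_algebra.
From mathcomp Require Import all_classical all_reals all_analysis.
Import Order.TTheory GRing.Theory Num.Theory.

Set Implicit Arguments.
Unset Strict Implicit.
Unset Printing Implicit Defensive.

Local Open Scope classical_set_scope.
Local Open Scope ring_scope.

(* A finite alphabet.  The point (an arbitrary element) is only needed so
   that MathComp-Analysis can build the measurable space; the alphabet is
   nonempty anyway since |Sigma| >= 2. *)
HB.structure Definition FinPointed := {T of Finite T & isPointed T}.

Definition Conf (S : FinPointed.type) : Type :=
  prod_topology (fun _ : int => discrete_topology S).

Definition BorelConf (S : FinPointed.type) :=
  g_sigma_algebraType (@open (Conf S)).

Definition sshift (S : FinPointed.type) (x : Conf S) : Conf S :=
  fun i => x (i + 1).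

Definition is_CA (S : FinPointed.type) (F : Conf S -> Conf S) : Prop :=
  continuous F /\ (forall x, F (sshift x) = sshift (F x)).

(* Besicovitch distance:
   d_B(x,y) = limsup_n |{ i : |i| <= n, x_i <> y_i }| / (2n+1).
   The indices i with |i| <= n are written k - n for k = 0, ..., 2n. *)
Definition dB (R : realType) (S : FinPointed.type) (x y : Conf S) : R :=
  limn_sup (fun n : nat =>
    (#|[set k : 'I_(2 * n + 1) | x (k%:Z - n%:Z) != y (k%:Z - n%:Z)]|%:R
      / (2 * n + 1)%:R)).

(* Main.v *)
Require Import Defs.
From HB Require Import structures.
From mathcomp Require Import all_boot all_order all_algebra.
From mathcomp Require Import all_classical all_reals all_analysis.
From mathcomp Require Import ring lra zify measurable_realfun.
Import Order.TTheory GRing.Theory Num.Theory.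
Local Open Scope classical_set_scope.
Local Open Scope ring_scope.

Set Implicit Arguments.
Unset Strict Implicit.
Unset Printing Implicit Defensive.

Section LimSup.
Variable R : realType.
Implicit Types u v : R^o^nat.

Lemma bnd01 u : (forall n, 0 <= u n <= 1) -> bounded_fun u.
Proof.
move=> h; exists 1; split => // M M1 n _ /=.
have /andP[h0 h1] := h n.
by rewrite ger0_norm // (le_trans h1) // ltW.
Qed.

Lemma ls_sups u m : bounded_fun u -> limn_sup u <= sups u m.
Proof.
move=> bu; rewrite limn_supE //; apply: ge_inf; last by exists m.
exact: bounded_fun_has_lbound_sups.
Qed.

Lemma le_sups u m n : bounded_fun u -> (m <= n)%N -> u n <= sups u m.
Proof.
move=> bu mn; apply: ub_le_sup; last by exists n.
exact/has_ubound_sdrop/bounded_fun_has_ubound.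
Qed.

Lemma ls_le_ev u e : bounded_fun u -> 0 < e ->
  exists m, forall n, (m <= n)%N -> u n <= limn_sup u + e.
Proof.
move=> bu e0; have : inf (range (sups u)) < limn_sup u + e.
  by rewrite -limn_supE // ltrDl.
move=> /inf_lt [].
  by exists (sups u 0%N); exists 0%N.
move=> _ [m _ <-] hm; exists m => n mn.
exact/ltW/(le_lt_trans (le_sups bu mn)).
Qed.

Lemma ls_le u a : bounded_fun u ->
  (forall e, 0 < e -> exists m, forall n, (m <= n)%N -> u n <= a + e) ->
  limn_sup u <= a.
Proof.
move=> bu h; apply/ler_addgt0Pr => e e0.
have [m hm] := h e e0.
apply: (le_trans (ls_sups m bu)); apply: ge_sup.
  by exists (u m); rewrite /sdrop /=; exists m.
by move=> y /= [n /= mn <-]; exact: hm.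
Qed.

Lemma ls_ge u a m : bounded_fun u -> (forall n, (m <= n)%N -> a <= u n) -> a <= limn_sup u.
Proof.
move=> bu h; apply/ler_addgt0Pr => e e0.
have [k hk] := ls_le_ev bu e0.
apply: (le_trans (h (maxn m k) (leq_maxl _ _))).
exact: hk (leq_maxr _ _).
Qed.

Lemma ls_exists u a : bounded_fun u -> a < limn_sup u -> exists n, a < u n.
Proof.
move=> bu ha; apply: contrapT => hn.
suff : limn_sup u <= a by rewrite leNgt ha.
apply: ls_le => // e e0; exists 0%N => n _.
have : ~ (a < u n) by move=> h; apply: hn; exists n.
move/negP; rewrite -leNgt => h.
by rewrite (le_trans h) // lerDl ltW.
Qed.

Lemma harm_small (e : R) : 0 < e -> exists K, forall n, (K <= n)%N -> n.+1%:R^-1 < e.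
Proof.
move=> e0; have := @near_infty_natSinv_lt R (PosNum e0).
by move=> [K _ HK]; exists K => n Kn; exact: HK.
Qed.

Lemma ls_shift_le u v : bounded_fun u -> bounded_fun v ->
  (forall n, u n <= v n.+1 + n.+1%:R^-1) -> limn_sup u <= limn_sup v.
Proof.
move=> bu bv h; apply: ls_le => // e e0.
have e20 : 0 < e / 2 by rewrite divr_gt0.
have [m hm] := ls_le_ev bv e20.
have [K hK] := harm_small e20.
exists (maxn m K) => n hn.
apply: (le_trans (h n)).
rewrite [e]splitr addrA lerD //.
  by apply: hm; apply: leqW; apply: leq_trans hn; exact: leq_maxl.
by apply/ltW/hK; apply: leq_trans hn; exact: leq_maxr.
Qed.

Lemma ls_shift_ge u v : bounded_fun u -> bounded_fun v ->
  (forall n, v n.+1 <= u n + n.+1%:R^-1) -> limn_sup v <= limn_sup u.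
Proof.
move=> bu bv h; apply: ls_le => // e e0.
have e20 : 0 < e / 2 by rewrite divr_gt0.
have [m hm] := ls_le_ev bu e20.
have [K hK] := harm_small e20.
exists (maxn m K).+1 => -[//|n]; rewrite ltnS => hn.
apply: (le_trans (h n)).
rewrite [e]splitr addrA lerD //.
  by apply: hm; apply: leq_trans hn; exact: leq_maxl.
by apply/ltW/hK; apply: leq_trans hn; exact: leq_maxr.
Qed.

Lemma ls_mono u v : bounded_fun u -> bounded_fun v ->
  (forall n, u n <= v n) -> limn_sup u <= limn_sup v.
Proof.
move=> bu bv h; apply: ls_le => // e e0.
have [m hm] := ls_le_ev bv e0.
by exists m => n mn; exact: le_trans (h n) (hm n mn).
Qed.

End LimSup.

Lemma indic01 (R : realType) (X : Type) (A : set X) x : 0 <= (\1_A x : R) <= 1.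
Proof. by rewrite indicE; case: (x \in A) => /=; rewrite ?lexx ?ler01. Qed.

Definition avg (R : realType) (X : Type) (T : X -> X) (D : set X) (n : nat) (x : X) : R :=
  (\sum_(0 <= k < n.+1) (\1_D (iter k T x) : R)) / n.+1%:R.

Definition gsup (R : realType) (X : Type) (T : X -> X) (D : set X) (x : X) : R :=
  limn_sup (fun n => avg R T D n x).

Section AvgProps.
Variables (R : realType) (X : Type) (T : X -> X) (D : set X).

Lemma sum_ind_01 (y : X) n :
  0 <= \sum_(0 <= k < n) (\1_D (iter k T y) : R) <= n%:R.
Proof.
apply/andP; split.
  by apply: sumr_ge0 => k _; have /andP[] := indic01 R D (iter k T y).
have -> : n%:R = \sum_(0 <= k < n) (1 : R) by rewrite sumr_const_nat subn0.
by apply: ler_sum => k _; have /andP[] := indic01 R D (iter k T y).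
Qed.

Lemma avg01 n x : 0 <= avg R T D n x <= 1.
Proof.
have /andP[s0 s1] := sum_ind_01 x n.+1.
rewrite /avg divr_ge0 //= ler_pdivrMr // mul1r //.
Qed.

Lemma avg_bnd x : bounded_fun (fun n => avg R T D n x).
Proof. by apply: bnd01 => n; exact: avg01. Qed.

Lemma gsup01 x : 0 <= gsup R T D x <= 1.
Proof.
apply/andP; split.
  apply: (@ls_ge _ _ _ 0%N (avg_bnd x)) => n _.
  by have /andP[] := avg01 n x.
apply: ls_le; first exact: avg_bnd.
move=> e e0; exists 0%N => n _.
have /andP[_ h] := avg01 n x.
by rewrite (le_trans h) // lerDl ltW.
Qed.

Lemma sum_shift x n : \sum_(0 <= k < n.+1) (\1_D (iter k T x) : R) =
  \1_D x + \sum_(0 <= k < n) (\1_D (iter k T (T x)) : R).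
Proof.
rewrite big_nat_recl //=; congr (_ + _).
by apply: eq_bigr => k _; rewrite -iterS iterSr.
Qed.

Lemma gsupT x : gsup R T D (T x) = gsup R T D x.
Proof.
have key : forall n, avg R T D n.+1 x * n.+2%:R =
   \1_D x + avg R T D n (T x) * n.+1%:R.
  move=> n; rewrite /avg !divfK ?pnatr_eq0 //.
  exact: sum_shift.
have h0 n := avg01 n (T x).
have h1 n := avg01 n.+1 x.
have i01 := indic01 R D x.
apply/eqP; rewrite eq_le; apply/andP; split.
  apply: ls_shift_le; [exact: avg_bnd|exact: avg_bnd|] => n.
  have := key n.
  set u := avg R T D n (T x); set v := avg R T D n.+1 x; set a := \1_D x.
  move: (h0 n) (h1 n) i01; rewrite -/u -/v -/a.
  have N0 : 0 < n.+1%:R :> R by [].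
  set N := n.+1%:R. rewrite (_ : n.+2%:R = N + 1); last by rewrite /N -natr1.
  move=> /andP[u0 u1] /andP[v0 v1] /andP[a0 a1] E.
  rewrite -(ler_pM2r N0) mulrDl mulVf ?gt_eqF //.
  lra.
apply: ls_shift_ge; [exact: avg_bnd|exact: avg_bnd|] => n.
have := key n.
set u := avg R T D n (T x); set v := avg R T D n.+1 x; set a := \1_D x.
move: (h0 n) (h1 n) i01; rewrite -/u -/v -/a.
have N0 : 0 < n.+1%:R :> R by [].
set N := n.+1%:R. rewrite (_ : n.+2%:R = N + 1); last by rewrite /N -natr1.
move=> /andP[u0 u1] /andP[v0 v1] /andP[a0 a1] E.
rewrite -(ler_pM2r N0) mulrDl mulVf ?gt_eqF //.
lra.
Qed.

Lemma gsup_iter m x : gsup R T D (iter m T x) = gsup R T D x.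
Proof. by elim: m => //= m IH; rewrite gsupT. Qed.

Lemma sum_split (G : X -> R) x m L : (m <= L)%N ->
  \sum_(0 <= k < L) G (iter k T x) =
  \sum_(0 <= k < m) G (iter k T x) + \sum_(0 <= k < L - m) G (iter k T (iter m T x)).
Proof.
move=> mL; rewrite (@big_cat_nat _ _ _ m) //=; congr (_ + _).
rewrite -{1}(add0n m) big_addn; apply: eq_bigr => k _.
by rewrite iterD.
Qed.

Lemma claim (e : R) (N : nat) (E : set X) : 0 <= e ->
  (forall x, ~ E x -> exists2 n, (n <= N)%N & gsup R T D x - e < avg R T D n x) ->
  forall L x, L%:R * gsup R T D x <=
    \sum_(0 <= k < L) (\1_D (iter k T x) + \1_E (iter k T x)) + N%:R + L%:R * e.
Proof.
move=> e0 hE L; elim: L {-2}L (leqnn L) => [|M IH] L hL x.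
  move: hL; rewrite leqn0 => /eqP ->.
  by rewrite big_geq // !mul0r add0r addr0.
have sum_ge0 : forall y K, 0 <= \sum_(0 <= k < K) (\1_D (iter k T y) + \1_E (iter k T y) : R).
  move=> y K; apply: sumr_ge0 => k _.
  have /andP[? _] := indic01 R D (iter k T y).
  have /andP[? _] := indic01 R E (iter k T y).
  by rewrite addr_ge0.
have g01 := gsup01 x.
case: L hL => [|L] hL.
  by rewrite big_geq // !mul0r add0r addr0.
case: (pselect (E x)) => Ex.
  rewrite (@sum_split (fun y => \1_D y + \1_E y) x 1 L.+1) // subn1 /=.
  rewrite big_nat1 /=.
  have := IH L hL (T x).
  rewrite gsupT.
  have hEx : \1_E x = 1 :> R by rewrite indicE mem_set.
  have /andP[d0 _] := indic01 R D x.
  rewrite hEx.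
  move: g01 => /andP[g0 g1].
  set S := \sum_(0 <= k < L) _.
  rewrite -natr1 => h.
  set gg := gsup R T D x in g0 g1 h *.
  set a := \1_D x in d0 *.
  lra.
have [n nN hn] := hE x Ex.
have hn' : (gsup R T D x - e) * n.+1%:R < \sum_(0 <= k < n.+1) (\1_D (iter k T x) : R).
  by rewrite -ltr_pdivlMr.
case: (leqP n.+1 L.+1) => hnL.
  rewrite (@sum_split (fun y => \1_D y + \1_E y) x n.+1 L.+1) //.
  have hL' : (L.+1 - n.+1 <= M)%N.
    by rewrite subSS; apply: leq_trans (leq_subr _ _) _.
  have := IH _ hL' (iter n.+1 T x).
  rewrite gsup_iter /=.
  set S2 := \sum_(0 <= k < L.+1 - n.+1) _.
  have S1 : \sum_(0 <= k < n.+1) (\1_D (iter k T x) : R) <=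
     \sum_(0 <= k < n.+1) (\1_D (iter k T x) + \1_E (iter k T x)).
    apply: ler_sum => k _; have /andP[? _] := indic01 R E (iter k T x).
    by rewrite lerDl.
  set S1' := \sum_(0 <= k < n.+1) (_ + _) in S1 *.
  set S0 := \sum_(0 <= k < n.+1) _ in S1 hn'.
  rewrite natrB //.
  set gg := gsup R T D x in hn' *.
  set l := (L.+1)%:R. set m := n.+1%:R.
  have := e0; lra.
have LN : (L.+1 <= N)%N by apply: leq_trans nN.
move: g01 => /andP[g0 g1].
have := sum_ge0 x L.+1.
set S := \sum_(0 <= k < L.+1) _.
have : (L.+1)%:R <= N%:R :> R by rewrite ler_nat.
have : 0 <= (L.+1)%:R * e by rewrite mulr_ge0.
set l := (L.+1)%:R. set gg := gsup R T D x in g0 g1 *.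
have : l * gg <= l by rewrite ler_piMr.
lra.
Qed.

End AvgProps.

Section Forward.
Context (R : realType) (d : measure_display) (X : measurableType d).
Variable P : probability X R.
Variable T : X -> X.
Hypothesis mT : measurable_fun setT T.
Hypothesis pT : forall A, measurable A -> P (T @^-1` A) = P A.
Variable D : set X.
Hypothesis mD : measurable D.

Lemma iter_mT k : measurable_fun setT (iter k T).
Proof.
elim: k => [|k IH]; first exact: measurable_id.
rewrite (_ : iter k.+1 T = T \o iter k T); last by apply: funext => x; rewrite iterS.
exact: measurableT_comp.
Qed.

Lemma iter_pT k A : measurable A -> P (iter k T @^-1` A) = P A.
Proof.
elim: k A => [|k IH] A mA; first by [].
rewrite (_ : iter k.+1 T @^-1` A = iter k T @^-1` (T @^-1` A)); last first.
  by apply/seteqP; split => x.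
rewrite IH ?pT //.
by have := mT measurableT mA; rewrite setTI.
Qed.

Lemma ind_iter_m (A : set X) k : measurable A ->
  measurable_fun setT (fun x => (\1_A (iter k T x) : R)).
Proof.
move=> mA; apply: (@measurableT_comp _ _ _ _ _ _ (\1_A : X -> R)).
  exact: measurable_indic.
exact: iter_mT.
Qed.

Lemma avg_meas n : measurable_fun setT (avg R T D n).
Proof.
rewrite /avg.
apply: (@measurable_funM _ _ _ _ (fun x => \sum_(0 <= k < n.+1) (\1_D (iter k T x) : R)) (cst (n.+1%:R^-1))).
  by apply: measurable_sum => k; exact: ind_iter_m.
exact: measurable_cst.
Qed.

Lemma gsup_meas : measurable_fun setT (gsup R T D).
Proof.
apply: (@measurable_fun_limn_sup _ _ _ _ (fun n => avg R T D n)).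
- by move=> x _; apply/bounded_fun_has_ubound/avg_bnd.
- by move=> x _; apply/bounded_fun_has_lbound/avg_bnd.
- by move=> n; exact: avg_meas.
Qed.

Lemma meas_le (f h : X -> R) : measurable_fun setT f -> measurable_fun setT h ->
  measurable [set x | f x <= h x].
Proof.
move=> mf mh; have mt : measurable [set true] by [].
have := measurable_fun_ler mf mh measurableT mt.
rewrite setTI; congr measurable; apply/seteqP; split => x /=; by [move=> ->|].
Qed.

End Forward.

Section Forward2.
Context (R : realType) (d : measure_display) (X : measurableType d).
Variable P : probability X R.
Variable T : X -> X.
Hypothesis mT : measurable_fun setT T.
Hypothesis pT : forall A, measurable A -> P (T @^-1` A) = P A.
Variable D : set X.
Hypothesis mD : measurable D.

Lemma Pfin (A : set X) : measurable A -> P A = (fine (P A))%:E.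
Proof. by move=> mA; rewrite fineK // fin_num_measure. Qed.

Lemma efin_mn (r : R) n : (((r%:E) *+ n)%R = (r *+ n)%:E)%E.
Proof. by elim: n => [|n IH]; rewrite ?mulr0n // !mulrS IH. Qed.

Lemma int_ind_iter (A : set X) k : measurable A ->
  (\int[P]_x (\1_A (iter k T x) : R)%:E = P A)%E.
Proof.
move=> mA.
rewrite (_ : (fun x => (\1_A (iter k T x) : R)%:E) = (fun x => (\1_(iter k T @^-1` A) x : R)%:E)); last first.
  by apply: funext => x; rewrite !indicE.
rewrite integral_indic; last first.
  by have := iter_mT mT k measurableT mA; rewrite setTI.
  by [].
by rewrite setIT; exact: (iter_pT mT pT k mA).
Qed.

Lemma int_rhs (E : set X) (mE : measurable E) L c : 0 <= c ->
  (\int[P]_x ((\sum_(0 <= k < L) (\1_D (iter k T x) + \1_E (iter k T x)) + c)%:E)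
   = (L%:R * (fine (P D) + fine (P E)) + c)%:E)%E.
Proof.
move=> c0.
have i01 (A : set X) y : (0 <= (\1_A y : R)%:E)%E by rewrite lee_fin; have /andP[] := indic01 R A y.
rewrite (_ : (fun x => _) = (fun x => \sum_(0 <= k < L) ((\1_D (iter k T x))%:E + (\1_E (iter k T x))%:E) + c%:E)%E); last first.
  apply: funext => x; rewrite EFinD -sumEFin; congr (_ + _)%E.
rewrite ge0_integralD //; last 2 first.
- by move=> x _; apply: sume_ge0 => k _; rewrite adde_ge0.
- apply: emeasurable_sum => k; apply: emeasurable_funD; apply/measurable_EFinP; exact: ind_iter_m.
rewrite ge0_integral_sum //; last 2 first.
- move=> k; apply: emeasurable_funD; apply/measurable_EFinP; exact: ind_iter_m.
- by move=> k x _; rewrite adde_ge0.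
have Hk : forall k, (\int[P]_x ((\1_D (iter k T x) : R)%:E + (\1_E (iter k T x) : R)%:E) = P D + P E)%E.
  move=> k; rewrite ge0_integralD //; last 2 first.
  - apply/measurable_EFinP; exact: ind_iter_m.
  - apply/measurable_EFinP; exact: ind_iter_m.
  by rewrite !int_ind_iter.
rewrite (eq_bigr _ (fun k _ => Hk k)) sumr_const_nat subn0.
rewrite (_ : \int[P]_x c%:E = c%:E)%E; last first.
  rewrite -[LHS]/(\int[P]_x (cst c%:E) x)%E integral_cst //.
  by rewrite [X in (_ * X)%E](probability_setT P) mule1.
move: (Pfin mD) (Pfin mE); set p := fine (P D); set q := fine (P E); move=> -> ->.
by rewrite -EFinD efin_mn -EFinD mulr_natl.
Qed.

End Forward2.

Section Forward3.
Context (R : realType) (d : measure_display) (X : measurableType d).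
Variable P : probability X R.
Variable T : X -> X.
Hypothesis mT : measurable_fun setT T.
Hypothesis pT : forall A, measurable A -> P (T @^-1` A) = P A.
Variable D : set X.
Hypothesis mD : measurable D.

Lemma forward_bound : (\int[P]_x (gsup R T D x)%:E <= P D)%E.
Proof.
set g := gsup R T D.
have mg : measurable_fun setT g := gsup_meas mT mD.
have g01 x : 0 <= g x <= 1 := @gsup01 R X T D x.
have I0 : (0 <= \int[P]_x (g x)%:E)%E.
  by apply: integral_ge0 => x _; rewrite lee_fin; have /andP[] := g01 x.
have I1 : (\int[P]_x (g x)%:E <= 1)%E.
  apply: (@le_trans _ _ (\int[P]_x (cst 1%E) x)%E).
    apply: ge0_le_integral => //.
    - by move=> x _; rewrite lee_fin; have /andP[] := g01 x.
    - exact/measurable_EFinP.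
    - by move=> x _; rewrite /= lee_fin; have /andP[] := g01 x.
  by rewrite integral_cst // [X in (_ * X)%E](probability_setT P) mule1.
have Ifin : (\int[P]_x (g x)%:E)%E \is a fin_num.
  by rewrite ge0_fin_numE // (le_lt_trans I1) // ltey.
move: (fineK Ifin); set i := fine _ => Ii.
move: (Pfin P mD); set p := fine (P D) => Pp.
rewrite -Ii Pp lee_fin.
apply/ler_addgt0Pr => e3 e30.
set e := e3 / 3.
have e0 : 0 < e by rewrite divr_gt0.
pose E N := [set x | forall n, (n <= N)%N -> avg R T D n x <= g x - e].
have mE N : measurable (E N).
  rewrite (_ : E N = \bigcap_(n in [set n | (n <= N)%N]) [set x | avg R T D n x <= g x - e]); last first.
    by apply/seteqP; split => x /= h n; [move=> nN; exact: h|exact: h].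
  apply: bigcap_measurableType => n _; apply: meas_le.
    exact: avg_meas.
  by apply: measurable_funB => //; exact: measurable_cst.
have decE : {homo E : n m / (n <= m)%N >-> (m <= n)%O}.
  move=> n m nm; rewrite subsetEset => x /= h k kn.
  by apply: h; apply: leq_trans nm.
have capE : \bigcap_n E n = set0.
  apply/seteqP; split => // x /= hx.
  have ge : g x - e < g x by rewrite ltrBlDr ltrDl.
  have [n hn] := ls_exists (@avg_bnd R X T D x) ge.
  have := hx n I n (leqnn n).
  by rewrite leNgt hn.
have cv := @nonincreasing_cvg_mu _ _ _ P E.
move: cv; rewrite capE measure0 => /(_ _ mE measurable0 decE).
move=> /(_ (le_lt_trans (probability_le1 P (mE 0%N)) (ltey _))) cv.
have e0E : (0 < e%:E)%E by rewrite lte_fin.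
have [N0 _ HN] := cv _ (open_ereal_lt' e0E).
set N := N0.
have PEN : (P (E N) < e%:E)%E := HN N (leqnn N).
move: (Pfin P (mE N)); set q := fine (P (E N)) => Pq.
have q0 : 0 <= q by rewrite -lee_fin -Pq.
have qe : q < e by rewrite -lte_fin -Pq.
have hE : forall x, ~ E N x -> exists2 n, (n <= N)%N & g x - e < avg R T D n x.
  move=> x Hx; case: (pselect (exists2 n, (n <= N)%N & g x - e < avg R T D n x)) => // H.
  exfalso; apply: Hx => n nN; rewrite leNgt; apply/negP => hlt; apply: H; exists n => //.
have HI : forall L, L%:R * i <= L%:R * (p + q) + (N%:R + L%:R * e).
  move=> L.
  have H : (\int[P]_x (L%:R * g x)%:E <= \int[P]_x
      ((\sum_(0 <= k < L) (\1_D (iter k T x) + \1_(E N) (iter k T x)) + (N%:R + L%:R * e))%:E))%E.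
    apply: ge0_le_integral => //.
    - by move=> x _; rewrite lee_fin mulr_ge0 //; have /andP[] := g01 x.
    - apply/measurable_EFinP; apply: measurable_funM => //; exact: measurable_cst.
    - apply/measurable_EFinP; apply: measurable_funD; last exact: measurable_cst.
      apply: measurable_sum => k; apply: measurable_funD; exact: ind_iter_m.
    - move=> x _; rewrite lee_fin addrA.
      exact: (@claim R X T D e N (E N) (ltW e0) hE L x).
  move: H; rewrite int_rhs //; last by rewrite addr_ge0 // mulr_ge0 // ltW.
  under eq_integral do rewrite EFinM.
  rewrite ge0_integralZl_EFin //; last 2 first.
  - by move=> x _; rewrite lee_fin; have /andP[] := g01 x.
  - exact/measurable_EFinP.
  by rewrite -Ii -EFinM lee_fin.
have eN0 : 0 < e / N.+1%:R by rewrite divr_gt0.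
have [K hK] := harm_small eN0.
have hK' := hK K (leqnn K).
have NL : N.+1%:R < e * K.+1%:R.
  by move: hK'; rewrite ltr_pdivlMr // mulrC ltr_pdivrMr.
have L0 : 0 < K.+1%:R :> R by [].
have HL := HI K.+1.
have Lq : K.+1%:R * q <= K.+1%:R * e by rewrite ler_pM2l // ltW.
have -> : e3 = e * 3 by rewrite /e divfK // pnatr_eq0.
rewrite -(ler_pM2l L0).
have NL' : N%:R < e * K.+1%:R by apply: lt_trans NL; rewrite ltr_nat.
move: NL' HL Lq L0. set L := K.+1%:R. set n := N%:R.
lra.
Qed.

End Forward3.

Definition shiftz (S : FinPointed.type) (i : int) (x : Conf S) : Conf S :=
  fun j => x (j + i).

Section Shift.
Variable S : FinPointed.type.
Definition TT := (forall j : int, discrete_topology S).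

Lemma shiftz_cont i (x : Conf S) : continuous_at x (@shiftz S i).
Proof.
have H := (@cvg_sup TT int (fun j => Topological.class (initial_topology (fun f : TT => f j)))
  (@shiftz S i @ x) (@shiftz S i x)).
apply H.
  exact: (@fmap_filter _ _ (@shiftz S i) (nbhs x) (@nbhs_filter (Conf S) x)).
move=> j.
have H2 := (@cvg_image TT (discrete_topology S) (fun f : TT => f j) (@shiftz S i @ x) (@shiftz S i x)).
apply H2.
  exact: (@fmap_filter _ _ (@shiftz S i) (nbhs x) (@nbhs_filter (Conf S) x)).
  by apply/seteqP; split => // s _; exists (fun _ => s).
move=> V /= hV.
have := @proj_continuous int (fun _ : int => discrete_topology S) (j + i) x.
move=> /(_ V hV) /= HV.
exists ((fun f : TT => f j) @^-1` V).
  exact: HV.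
apply: image_preimage.
by apply/seteqP; split => // s _; exists (fun _ => s).
Qed.

Lemma shiftz_add i j (x : Conf S) : shiftz i (shiftz j x) = shiftz (i + j) x.
Proof. by apply: funext => k; rewrite /shiftz addrA. Qed.

Lemma shiftz0 (x : Conf S) : shiftz 0 x = x.
Proof. by apply: funext => k; rewrite /shiftz addr0. Qed.

Lemma borel_open (A : set (Conf S)) : open A -> measurable (A : set (BorelConf S)).
Proof. by move=> oA; apply: sub_sigma_algebra. Qed.

Lemma shiftz_meas i : measurable_fun setT (@shiftz S i : BorelConf S -> BorelConf S).
Proof.
have E : @measurable _ (BorelConf S) = <<s (@open (Conf S)) >> by [].
apply: (@measurability _ _ (BorelConf S) (BorelConf S) setT (@shiftz S i) (@open (Conf S)) E).
move=> _ [B oB <-]; rewrite setTI; apply: borel_open.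
by move: oB; apply: (continuousP (@shiftz S i)).1 => x; exact: shiftz_cont.
Qed.

End Shift.

Section Shift2.
Variable S : FinPointed.type.

Lemma sshiftE (x : Conf S) : sshift x = shiftz 1 x.
Proof. by []. Qed.

Lemma iter_shiftP k (x : Conf S) : iter k (@shiftz S 1) x = shiftz k%:Z x.
Proof.
elim: k => [|k IH] /=; first by rewrite shiftz0.
by rewrite IH shiftz_add -addn1 PoszD addrC.
Qed.

Lemma iter_shiftN k (x : Conf S) : iter k (@shiftz S (-1)) x = shiftz (- k%:Z) x.
Proof.
elim: k => [|k IH] /=; first by rewrite oppr0 shiftz0.
by rewrite IH shiftz_add -addn1 PoszD opprD addrC.
Qed.

Lemma CA_comm (c : Conf S -> Conf S) : is_CA c -> forall i x, c (shiftz i x) = shiftz i (c x).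
Proof.
move=> [_ hc].
have h1 x : c (shiftz 1 x) = shiftz 1 (c x) by exact: hc.
have hm1 x : c (shiftz (-1) x) = shiftz (-1) (c x).
  have -> : c x = c (shiftz 1 (shiftz (-1) x)) by rewrite shiftz_add addrC subrr shiftz0.
  by rewrite h1 shiftz_add addrC subrr shiftz0.
have hp : forall k : nat, (forall x, c (shiftz k%:Z x) = shiftz k%:Z (c x)) /\
                         (forall x, c (shiftz (- k%:Z) x) = shiftz (- k%:Z) (c x)).
  elim=> [|k [IH1 IH2]]; first by split => x; rewrite ?oppr0 !shiftz0.
  split => x.
    have -> : (k.+1)%:Z = 1 + k%:Z by rewrite -addn1 PoszD addrC.
    by rewrite -shiftz_add h1 IH1 shiftz_add.
  have -> : - (k.+1)%:Z = -1 + - k%:Z by rewrite -addn1 PoszD opprD addrC.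
  by rewrite -shiftz_add hm1 IH2 shiftz_add.
move=> [k|k] x; first exact: (hp k).1.
by rewrite NegzE; exact: (hp k.+1).2.
Qed.

Lemma shift1_pres (R : realType) (mu : probability (BorelConf S) R) :
  (forall C : set (BorelConf S), measurable C -> mu (@sshift S @` C) = mu C) ->
  forall A : set (BorelConf S), measurable A -> mu (@shiftz S 1 @^-1` A) = mu A.
Proof.
move=> h A mA.
have mC : measurable (@shiftz S 1 @^-1` A : set (BorelConf S)).
  by have := shiftz_meas 1 measurableT mA; rewrite setTI.
rewrite -(h _ mC); congr (mu _).
apply/seteqP; split => y /=.
  by move=> [x Ax <-].
move=> Ay; exists (shiftz (-1) y); rewrite /= ?shiftz_add ?subrr ?shiftz0 //.
by rewrite sshiftE shiftz_add subrr shiftz0.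
Qed.

Lemma shiftm1_pres (R : realType) (mu : probability (BorelConf S) R) :
  (forall C : set (BorelConf S), measurable C -> mu (@sshift S @` C) = mu C) ->
  forall A : set (BorelConf S), measurable A -> mu (@shiftz S (-1) @^-1` A) = mu A.
Proof.
move=> h A mA; rewrite -(h _ mA); congr (mu _).
apply/seteqP; split => y /=.
  move=> Ay; exists (shiftz (-1) y) => //.
  by rewrite sshiftE shiftz_add subrr shiftz0.
by move=> [x Ax <-]; rewrite sshiftE shiftz_add addrC subrr shiftz0.
Qed.

Lemma coord_nbhs (c : Conf S -> Conf S) (x : Conf S) (i : int) : continuous c ->
  nbhs x [set y : Conf S | c y i = c x i].
Proof.
move=> hc.
have h1 : {for x, continuous ((fun f : Conf S => f i) \o c)}.
  apply: continuous_comp; first exact: hc.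
  exact: (@proj_continuous int (fun _ : int => discrete_topology S) i (c x)).
have := h1 [set c x i].
apply.
exact: (@discrete_set1 (discrete_topology S) (c x i)).
Qed.

Lemma Dset_open (c d : Conf S -> Conf S) : continuous c -> continuous d ->
  open [set x : Conf S | c x 0 != d x 0].
Proof.
move=> hc hd; rewrite openE => x /= Dx.
rewrite /interior.
apply: filterS (filterI (coord_nbhs x 0 hc) (coord_nbhs x 0 hd)).
by move=> y /= [-> ->].
Qed.

End Shift2.

Definition symavg (R : realType) (S : FinPointed.type) (D : set (Conf S)) (n : nat) (x : Conf S) : R :=
  (\sum_(0 <= k < (2 * n + 1)%N) (\1_D (shiftz (k%:Z - n%:Z) x) : R)) / (2 * n + 1)%:R.

Section Sym.
Variables (R : realType) (S : FinPointed.type).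

Lemma sum_sym_le (D : set (Conf S)) (x : Conf S) n :
  \sum_(0 <= k < (2 * n + 1)%N) (\1_D (shiftz (k%:Z - n%:Z) x) : R) <=
  \sum_(0 <= k < n.+1) (\1_D (iter k (@shiftz S 1) x) : R) +
  \sum_(0 <= k < n.+1) (\1_D (iter k (@shiftz S (-1)) x) : R).
Proof.
have F0 i : 0 <= (\1_D (shiftz i x) : R) by have /andP[] := indic01 R D (shiftz i x).
rewrite (@big_cat_nat _ _ _ n) //=; last by lia.
rewrite addrC; apply: lerD.
  rewrite -{1}(add0n n) big_addn.
  have -> : (2 * n + 1 - n = n.+1)%N by lia.
  rewrite le_eqVlt; apply/orP; left; apply/eqP.
  apply: eq_bigr => k _; rewrite iter_shiftP; congr (\1_D (shiftz _ x) : R).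
  by rewrite PoszD addrK.
apply: (@le_trans _ _ (\sum_(0 <= k < n) (\1_D (iter k.+1 (@shiftz S (-1)) x) : R))).
  rewrite le_eqVlt; apply/orP; left; apply/eqP.
  rewrite big_nat_rev /= add0n.
  apply: eq_big_nat => k /andP[_ kn].
  rewrite iter_shiftN shiftz_add.
  have -> : ((n - k.+1)%N%:Z - n%:Z) = -1 + - k%:Z :> int by lia.
  by [].
rewrite big_nat_recl //= lerDr.
by have /andP[] := indic01 R D x.
Qed.

Lemma sum_ind_01' (D : set (Conf S)) (f : nat -> Conf S) m :
  0 <= \sum_(0 <= k < m) (\1_D (f k) : R) <= m%:R.
Proof.
apply/andP; split.
  by apply: sumr_ge0 => k _; have /andP[] := indic01 R D (f k).
have -> : m%:R = \sum_(0 <= k < m) (1 : R) by rewrite sumr_const_nat subn0.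
by apply: ler_sum => k _; have /andP[] := indic01 R D (f k).
Qed.

Lemma symavg01 (D : set (Conf S)) n x : 0 <= symavg R D n x <= 1.
Proof.
have /andP[s0 s1] := sum_ind_01' D (fun k => shiftz (k%:Z - n%:Z) x) (2 * n + 1).
by rewrite /symavg divr_ge0 //= ler_pdivrMr ?mul1r // ltr0n addn1.
Qed.

Lemma symavg_bnd (D : set (Conf S)) x : bounded_fun (fun n => symavg R D n x).
Proof. by apply: bnd01 => n; exact: symavg01. Qed.

Lemma symavg_le (D : set (Conf S)) n x : symavg R D n x <=
  (avg R (@shiftz S 1) D n x + avg R (@shiftz S (-1)) D n x) / 2 + n.+1%:R^-1.
Proof.
have H := sum_sym_le D x n.
have /andP[u0 u1] := avg01 R (@shiftz S 1) D n x.
have /andP[v0 v1] := avg01 R (@shiftz S (-1)) D n x.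
move: H u0 u1 v0 v1; rewrite /symavg /avg.
set A := \sum_(0 <= k < (2 * n + 1)%N) _.
set B := \sum_(0 <= k < n.+1) (\1_D (iter k (shiftz 1) x) : R).
set C := \sum_(0 <= k < n.+1) (\1_D (iter k (shiftz (-1)) x) : R).
have N0 : 0 < n.+1%:R :> R by [].
set N := n.+1%:R.
have -> : (2 * n + 1)%:R = 2 * N - 1 :> R by rewrite /N natrD natrM -natr1; ring.
set u := B / N. set v := C / N.
have Bu : B = u * N by rewrite /u divfK // gt_eqF.
have Cv : C = v * N by rewrite /v divfK // gt_eqF.
rewrite Bu Cv => H u0 u1 v0 v1.
have N1 : 1 <= N by rewrite /N ler1n.
have M0 : 0 < 2 * N - 1 by lra.
rewrite ler_pdivrMr //.
have rN : N^-1 * N = 1 by rewrite mulVf // gt_eqF.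
have r1 : N^-1 <= 1 by rewrite invf_le1 // /N ler1n.
have r0 : 0 <= N^-1 by rewrite invr_ge0 ltW.
move: rN r1 r0; set r := N^-1 => rN r1 r0.
nra.
Qed.

Lemma sym_ls_le (D : set (Conf S)) x :
  limn_sup (fun n => symavg R D n x) <=
  (gsup R (@shiftz S 1) D x + gsup R (@shiftz S (-1)) D x) / 2.
Proof.
apply: ls_le; first exact: symavg_bnd.
move=> e e0.
have e3 : 0 < e / 3 by rewrite divr_gt0.
have [m1 h1] := ls_le_ev (@avg_bnd R _ (@shiftz S 1) D x) e3.
have [m2 h2] := ls_le_ev (@avg_bnd R _ (@shiftz S (-1)) D x) e3.
have [K hK] := harm_small e3.
exists (maxn m1 (maxn m2 K)) => n hn.
have n1 : (m1 <= n)%N by lia.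
have n2 : (m2 <= n)%N by lia.
have n3 : (K <= n)%N by lia.
have := symavg_le D n x.
have := h1 n n1; have := h2 n n2; have := hK n n3.
rewrite /gsup.
set a := avg _ _ _ n x. set b := avg _ _ _ n x.
set ga := limn_sup _. set gb := limn_sup _.
set r := n.+1%:R^-1.
lra.
Qed.

Lemma sym_compl (D : set (Conf S)) n x : symavg R D n x + symavg R (~` D) n x = 1.
Proof.
rewrite /symavg -mulrDl -big_split /=.
rewrite (eq_bigr (fun _ => 1)); last first.
  by move=> k _; rewrite !indicE; case: (boolP (_ \in D)) => h;
    rewrite ?in_setC ?h //= ?addr0 ?add0r.
by rewrite sumr_const_nat subn0 mulfV // pnatr_eq0 addn1.
Qed.

Lemma sym_ls_compl (D : set (Conf S)) x :
  1 <= limn_sup (fun n => symavg R D n x) + limn_sup (fun n => symavg R (~` D) n x).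
Proof.
apply: le_trans; last exact: (le_limn_supD (symavg_bnd D x) (symavg_bnd (~` D) x)).
apply: (@ls_ge _ _ _ 0%N).
  by apply: bounded_funD; [exact: symavg_bnd|exact: symavg_bnd].
by move=> n _; rewrite /= sym_compl.
Qed.

End Sym.

Section Main.
Variables (R : realType) (S : FinPointed.type).
Variable mu : probability (BorelConf S) R.
Hypothesis mu_shift_inv : forall C : set (BorelConf S),
      measurable C -> mu (@sshift S @` C) = mu C.

Lemma symavg_meas (D : set (BorelConf S)) n : measurable D ->
  measurable_fun setT (symavg R D n : BorelConf S -> R).
Proof.
move=> mD; rewrite /symavg.
apply: (@measurable_funM _ _ _ _ (fun x : BorelConf S => \sum_(0 <= k < (2 * n + 1)%N) (\1_D (shiftz (k%:Z - n%:Z) x) : R)) (cst ((2 * n + 1)%:R^-1))); last exact: measurable_cst.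
apply: measurable_sum => k.
apply: (@measurableT_comp _ _ _ _ _ _ (\1_D : BorelConf S -> R)).
  exact: measurable_indic.
exact: shiftz_meas.
Qed.

Lemma Ls_meas (D : set (BorelConf S)) : measurable D ->
  measurable_fun setT (fun x : BorelConf S => limn_sup (fun n => symavg R D n x)).
Proof.
move=> mD; apply: (@measurable_fun_limn_sup _ (BorelConf S) R _ (fun n => (symavg R D n : BorelConf S -> R))).
- by move=> x _; apply/bounded_fun_has_ubound/symavg_bnd.
- by move=> x _; apply/bounded_fun_has_lbound/symavg_bnd.
- by move=> n; exact: symavg_meas.
Qed.

Lemma sym_bound (D : set (BorelConf S)) : measurable D ->
  (\int[mu]_x (limn_sup (fun n => symavg R D n x))%:E <= mu D)%E.
Proof.
move=> mD.
pose gu : BorelConf S -> R := gsup R (@shiftz S 1) D.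
pose gv : BorelConf S -> R := gsup R (@shiftz S (-1)) D.
have Hu : (\int[mu]_x (gu x)%:E <= mu D)%E.
  apply: (@forward_bound R _ (BorelConf S) mu (@shiftz S 1)) => //; first exact: shiftz_meas.
  exact: shift1_pres.
have Hv : (\int[mu]_x (gv x)%:E <= mu D)%E.
  apply: (@forward_bound R _ (BorelConf S) mu (@shiftz S (-1))) => //; first exact: shiftz_meas.
  exact: shiftm1_pres.
have mu_ : measurable_fun setT gu by apply: (@gsup_meas R _ (BorelConf S)) => //; exact: shiftz_meas.
have mv_ : measurable_fun setT gv by apply: (@gsup_meas R _ (BorelConf S)) => //; exact: shiftz_meas.
have gu0 x : 0 <= gu x by have /andP[] := gsup01 R (@shiftz S 1) D x.
have gv0 x : 0 <= gv x by have /andP[] := gsup01 R (@shiftz S (-1)) D x.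
have H1 : (\int[mu]_x (limn_sup (fun n => symavg R D n x))%:E <=
           \int[mu]_x ((2^-1)%:E * ((gu x)%:E + (gv x)%:E)))%E.
  apply: ge0_le_integral => //.
  - move=> x _; rewrite lee_fin; apply: (@ls_ge _ _ _ 0%N) => [|n _].
      exact: symavg_bnd.
    by have /andP[] := symavg01 R D n x.
  - by apply/measurable_EFinP; exact: Ls_meas.
  - apply: emeasurable_funM; first exact: measurable_cst.
    by apply: emeasurable_funD; apply/measurable_EFinP.
  - move=> x _; rewrite -EFinD -EFinM lee_fin mulrC.
    exact: sym_ls_le.
apply: (le_trans H1).
have h0 : forall x, [set: BorelConf S] x -> (0 <= (gu x)%:E + (gv x)%:E)%E.
  by move=> x _; rewrite adde_ge0 // lee_fin.
have hm : measurable_fun setT (fun x => ((gu x)%:E + (gv x)%:E)%E).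
  by apply: emeasurable_funD; apply/measurable_EFinP.
have k0 : (0 <= 2^-1 :> R) by rewrite invr_ge0.
rewrite (ge0_integralZl_EFin mu measurableT h0 hm k0).
rewrite ge0_integralD //; last first.
  exact/measurable_EFinP.
  by move=> x _; rewrite lee_fin.
  exact/measurable_EFinP.
  by move=> x _; rewrite lee_fin.
move: (Pfin mu mD); set p := fine (mu D) => Pp.
rewrite Pp in Hu Hv *.
apply: (le_trans (lee_wpmul2l _ (leeD Hu Hv))).
  by rewrite lee_fin invr_ge0.
by rewrite -EFinD -EFinM lee_fin; lra.
Qed.

End Main.

Unset Implicit Arguments.
Set Strict Implicit.
Set Printing Implicit Defensive.

Lemma card_sum (R : realType) (S : FinPointed.type) (c d : Conf S -> Conf S)
  (hc : is_CA c) (hd : is_CA d) (n : nat) (x : Conf S) :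
  (#|[set k : 'I_(2 * n + 1) | c x (k%:Z - n%:Z) != d x (k%:Z - n%:Z)]|%:R : R) =
  \sum_(0 <= k < (2 * n + 1)%N)
     (\1_[set y : Conf S | c y 0 != d y 0] (shiftz (k%:Z - n%:Z) x) : R).
Proof.
rewrite -sum1_card natr_sum big_mkcond /= big_mkord.
apply: eq_bigr => k _; rewrite indicE unfold_in /= asboolb.
have E : (c (shiftz (k%:Z - n%:Z) x) 0 != d (shiftz (k%:Z - n%:Z) x) 0) =
         (c x (k%:Z - n%:Z) != d x (k%:Z - n%:Z)).
  by rewrite (CA_comm hc) (CA_comm hd) /shiftz add0r.
rewrite -E.
case: (boolP (c (shiftz (k%:Z - n%:Z) x) 0 != d (shiftz (k%:Z - n%:Z) x) 0)) => h.
  by rewrite mem_set.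
by rewrite memNset //; apply/negP.
Qed.

Theorem mainTheorem20 (R : realType) (S : FinPointed.type) (hS : (1 < #|S|)%N)
  (mu : probability (BorelConf S) R)
  (mu_shift_inv : forall C : set (BorelConf S),
      measurable C -> mu (@sshift S @` C) = mu C)
  (c d : Conf S -> Conf S) (hc : is_CA c) (hd : is_CA d) :
  (\int[mu]_x (dB R (c x) (d x))%:E = mu [set x : BorelConf S | c x 0%R != d x 0%R])%E.
Proof.
set D := [set x : BorelConf S | c x 0%R != d x 0%R].
have mD : measurable D := borel_open (Dset_open hc.1 hd.1).
have dBE x : dB R (c x) (d x) = limn_sup (fun n => symavg R D n x).
  rewrite /dB /symavg; congr limn_sup; apply: funext => n.
  by rewrite (@card_sum R S c d hc hd n x).
under eq_integral do rewrite dBE.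
have H1 := sym_bound mu_shift_inv mD.
have H2 := sym_bound mu_shift_inv (measurableC mD).
rewrite probability_setC // in H2.
have L0 (A : set (BorelConf S)) x : 0 <= limn_sup (fun n => symavg R A n x).
  apply: (@ls_ge _ _ _ 0%N) => [|n _]; first exact: symavg_bnd.
  by have /andP[] := symavg01 R A n x.
have H3 : (1 <= \int[mu]_x (limn_sup (fun n => symavg R D n x))%:E +
               \int[mu]_x (limn_sup (fun n => symavg R (~` D) n x))%:E)%E.
  have h0D : forall x, [set: BorelConf S] x -> (0 <= (limn_sup (fun n => symavg R D n x))%:E)%E.
    by move=> x _; rewrite lee_fin.
  have h0C : forall x, [set: BorelConf S] x -> (0 <= (limn_sup (fun n => symavg R (~` D) n x))%:E)%E.
    by move=> x _; rewrite lee_fin.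
  have hmD : measurable_fun setT (fun x : BorelConf S => (limn_sup (fun n => symavg R D n x))%:E).
    by apply/measurable_EFinP; exact: Ls_meas.
  have hmC : measurable_fun setT (fun x : BorelConf S => (limn_sup (fun n => symavg R (~` D) n x))%:E).
    by apply/measurable_EFinP; apply: Ls_meas; exact: measurableC.
  rewrite -(ge0_integralD mu measurableT h0D hmD h0C hmC).
  apply: (@le_trans _ _ (\int[mu]_x (cst 1%E) x)%E).
    by rewrite integral_cst // [X in (_ * X)%E](probability_setT mu) mule1.
  apply: ge0_le_integral => //.
  - by apply: emeasurable_funD.
  - by move=> x _; rewrite -EFinD lee_fin; exact: sym_ls_compl.
have I0 (A : set (BorelConf S)) : (0 <= \int[mu]_x (limn_sup (fun n => symavg R A n x))%:E)%E.
  by apply: integral_ge0 => x _; rewrite lee_fin.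
move: (Pfin mu mD); set p := fine (mu D) => Pp.
rewrite Pp in H1 H2 *.
have F1 : (\int[mu]_x (limn_sup (fun n => symavg R D n x))%:E)%E \is a fin_num.
  by rewrite ge0_fin_numE // (le_lt_trans H1) // ltey.
have F2 : (\int[mu]_x (limn_sup (fun n => symavg R (~` D) n x))%:E)%E \is a fin_num.
  by rewrite ge0_fin_numE // (le_lt_trans H2) // ltey.
move: (fineK F1) (fineK F2) H1 H2 H3.
set a := fine _. set b := fine _.
move=> <- <- h1 h2 h3.
have g1 : a <= p by rewrite -lee_fin.
have g2 : b <= 1 - p by rewrite -lee_fin.
have g3 : 1 <= a + b by rewrite -lee_fin.
by congr (_%:E); lra.
Qed.
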